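(* For the g-cell structure $\{(G_i,r_i),g_i^{i+1}\}_{i\in\mathbb{N}}$ constructed below, the quotient space $G^\ast=G_\infty/r$ is not regular: the point $\pi(\bar a)$, where $\bar a=(a_1,a_2,\dots)$, and the closed set $\pi(\{(b_1^k,b_2^k,\dots):k\in\mathbb{N}\})$, which does not contain $\pi(\bar a)$, cannot be separated by disjoint open sets. In particular, there exist spaces admitting a g-cell structure (with all $G_i$ discrete) which are not regular.
   Context: Construction. Let $L_1=0$ and $L_{i+1}=L_i+i$. All sets are discrete and all named elements distinct. $G_1=\{a_1\}\cup\{b_1^k:k\in\mathbb{N}\}$. For $i\ge2$, with $C^i_k=\{c^1_{i,k},c^2_{i,k}\}$ for $1\le k\le L_i$, $G_i=\{a_i\}\cup\{b_i^k:k\in\mathbb{N}\}\cup\bigcup_{k=1}^{L_i}C^i_k\cup\{d_i^k:k\in\mathbb{N}\}$. $r_i$ is the union of $\Delta_{G_i}$ with $\{(a_i,b_i^k),(b_i^k,a_i):k\ge i\}$, $\{(b_i^k,b_i^n):k,n\ge i\}$, $\{(a,b):a,b\in C^i_k,\ 1\le k\le L_i\}$ and $\{(d_i^{(i-1)j+k},b_i^k),(b_i^k,d_i^{(i-1)j+k}):1\le k<i,\ j\ge0\}$. The map $g_i^{i+1}:G_{i+1}\to G_i$: $a_{i+1}\mapsto a_i$; $b_{i+1}^k\mapsto b_i^k$; $c^1_{i+1,1}\mapsto a_i$; $c^2_{i+1,1}\mapsto b_i^i$; $c^\rho_{i+1,k}\mapsto c^\rho_{i,k-1}$ ($\rho=1,2$,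 $2\le k\le L_i+1$); $c^1_{i+1,k}\mapsto d_i^{k-(L_i+1)}$ and $c^2_{i+1,k}\mapsto b_i^{k-(L_i+1)}$ ($L_i+2\le k\le L_{i+1}$); $d_{i+1}^k\mapsto d_i^{(i-1)(j+1)+n}$ if $k=ij+n$, $0<n<i$, $j\ge0$; $d_{i+1}^k\mapsto a_i$ if $k=ij$, $j\ge1$. $G_\infty=\{(x_n)\in\prod G_n:g_i^{i+1}(x_{i+1})=x_i\ \forall i\}$ with the product topology; the natural relation $r=\{(\bar x,\bar y)\in G_\infty^2:(x_n,y_n)\in r_n\ \forall n\}$ is an equivalence relation (this sequence is a g-cell structure); $G^\ast=G_\infty/r$ has the quotient topology and $\pi:G_\infty\to G^\ast$ is the quotient map. A space admits a g-cell structure if it is homeomorphic to $G^\ast$ for some inverse sequence of cellular graphs (pairs of a nonempty space and a reflexive symmetric relation, with continuous edge-preserving bonding maps) whose natural relation is an equivalence relation. Regular means: every point and closed set not containing it have disjoint open neighbourhoods. *)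

(* Defs.v *)
From Stdlib Require Import Arith Lia.

(* L_1 = 0, L_{i+1} = L_i + i  (L_0 is a dummy value) *)
Fixpoint L (i : nat) : nat :=
  match i with
  | 0 => 0
  | 1 => 0
  | S (S _ as p) => L p + p
  end.

(* Names of elements: a, b^k, c^rho_k (rho = true for 1, false for 2), d^k.
   The element x of G_i is named with the same constructor for every i. *)
Inductive elt : Type :=
| A : elt
| B : nat -> elt
| C : bool -> nat -> elt
| D : nat -> elt.

Definition inG (i : nat) (e : elt) : Prop :=
  1 <= i /\
  match e with
  | A => True
  | B k => 1 <= k
  | C _ k => 2 <= i /\ 1 <= k <= L i
  | D k => 2 <= i /\ 1 <= k
  end.

Definition r (i : nat) (x y : elt) : Prop :=
  inG i x /\ inG i y /\
  ( x = y
  \/ (exists k, i <= k /\ ((x = A /\ y = B k) \/ (x = B k /\ y = A)))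
  \/ (exists k n, i <= k /\ i <= n /\ x = B k /\ y = B n)
  \/ (exists k rho rho', 1 <= k <= L i /\ x = C rho k /\ y = C rho' k)
  \/ (exists k j, 1 <= k < i /\
        ((x = D ((i - 1) * j + k) /\ y = B k) \/
         (x = B k /\ y = D ((i - 1) * j + k))))).

Definition g (i : nat) (e : elt) : elt :=
  match e with
  | A => A
  | B k => B k
  | C rho k =>
      if k =? 1 then (if rho then A else B i)
      else if k <=? L i + 1 then C rho (k - 1)
      else (if rho then D (k - (L i + 1)) else B (k - (L i + 1)))
  | D k =>
      if k mod i =? 0 then A
      else D ((i - 1) * (k / i + 1) + k mod i)
  end.

(* G_infty.  A point is coded by x : nat -> elt with  x n = x_{n+1}
   (coordinate n+1), so that indices start at 1 as in the paper. *)
Definition is_thread (x : nat -> elt) : Prop :=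
  forall n, inG (S n) (x n) /\ g (S n) (x (S n)) = x n.

Definition Ginf : Type := { x : nat -> elt | is_thread x }.

Definition coord (x : Ginf) (n : nat) : elt := proj1_sig x n.

(* product topology of the discrete spaces G_n, restricted to G_infty:
   U is open iff each point of U has a basic cylinder neighbourhood
   (fixing finitely many coordinates, wlog the first n) inside U *)
Definition open_inf (U : Ginf -> Prop) : Prop :=
  forall x, U x -> exists n, forall y : Ginf,
      (forall m, m < n -> coord y m = coord x m) -> U y.

Definition rinf (x y : Ginf) : Prop := forall n, r (S n) (coord x n) (coord y n).

Definition rclass (x : Ginf) : Ginf -> Prop := fun y => rinf x y.

Definition Gstar : Type := { S : Ginf -> Prop | exists x, S = rclass x }.

Definition pi (x : Ginf) : Gstar := exist _ (rclass x) (ex_intro _ x eq_refl).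

Definition open_star (V : Gstar -> Prop) : Prop := open_inf (fun x => V (pi x)).
Definition closed_star (F : Gstar -> Prop) : Prop := open_star (fun p => ~ F p).

Definition regular_star : Prop :=
  forall (p : Gstar) (F : Gstar -> Prop), closed_star F -> ~ F p ->
    exists U V : Gstar -> Prop, open_star U /\ open_star V /\ U p /\
      (forall q, F q -> V q) /\ (forall q, U q -> V q -> False).

Lemma abar_thread : is_thread (fun _ => A).
Proof. intro n; split; [split; [lia | exact I] | reflexivity]. Qed.
Definition abar : Ginf := exist _ (fun _ => A) abar_thread.

(* the points (b_1^k, b_2^k, ...), k >= 1, indexed by k-1 *)
Lemma bseq_thread (k : nat) : is_thread (fun _ => B (S k)).
Proof. intro n; split; [split; [lia | simpl; lia] | reflexivity]. Qed.
Definition bseq (k : nat) : Ginf := exist _ (fun _ => B (S k)) (bseq_thread k).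

Definition Bset : Gstar -> Prop := fun p => exists k, p = pi (bseq k).

(* Main.v *)
Require Import Defs.
From Stdlib Require Import Arith Lia ProofIrrelevance FunctionalExtensionality PropExtensionality Classical.

Lemma L_S i : 1 <= i -> L (S i) = L i + i.
Proof. destruct i as [|i]; [lia|]. destruct i; reflexivity. Qed.

Lemma L_1 : L 1 = 0. Proof. reflexivity. Qed.

Lemma L_mono a b : 1 <= a -> a <= b -> L a + (b - a) <= L b.
Proof.
  intros Ha Hab. induction b as [|b IH]; [lia|].
  destruct (Nat.eq_dec a (S b)) as [->|Hne]; [lia|].
  rewrite L_S by lia. specialize (IH ltac:(lia)). lia.
Qed.

Lemma divmod m a k : k < m -> (m * a + k) mod m = k /\ (m * a + k) / m = a.
Proof.
  intros H. split.
  - symmetry. apply (Nat.mod_unique _ _ a); lia.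
  - symmetry. apply (Nat.div_unique _ _ _ k); lia.
Qed.

Lemma gD m a k : 1 <= k -> k < S m -> g (S m) (D (S m * a + k)) = D (m * (a+1) + k).
Proof.
  intros H1 H2. unfold g; cbv beta iota. destruct (divmod (S m) a k H2) as [E1 E2].
  rewrite E1, E2. destruct (Nat.eqb_spec k 0); [lia|].
  f_equal. f_equal. lia.
Qed.

Lemma g_inG i e : 1 <= i -> inG (S i) e -> inG i (g i e).
Proof.
  intros Hi He. destruct e as [|k|rho k|k]; unfold inG in *; unfold g; cbv beta iota.
  - split; auto.
  - split; [auto|]. apply He.
  - destruct He as [_ [H2 Hk]].
    assert (i = 1 \/ 2 <= i) as [->|Hi2] by lia.
    + simpl in Hk. destruct (Nat.eqb_spec k 1); [|lia]. destruct rho; split; auto.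
    + rewrite L_S in Hk by lia.
      destruct (Nat.eqb_spec k 1); [destruct rho; split; auto; lia|].
      destruct (Nat.leb_spec k (L i + 1)).
      * split; [lia|]. split; [lia|]. lia.
      * destruct rho; repeat split; lia.
  - destruct He as [_ [H2 Hk]].
    destruct (Nat.eqb_spec (k mod i) 0); [split; auto|].
    assert (2 <= i). { destruct (Nat.eq_dec i 1) as [->|]; [rewrite Nat.mod_1_r in *; lia|lia]. }
    split; [lia|]. split; [lia|].
    assert (k mod i < i) by (apply Nat.mod_upper_bound; lia). remember (k mod i) as r0. remember ((i-1)*(k/i+1)) as q0. lia.
Qed.

Ltac rinv H :=
  destruct H as (?Hx & ?Hy & [?E | [[?k [?Hk [[?E1 ?E2]|[?E1 ?E2]]]] | [[?k [?n [?Hk [?Hn [?E1 ?E2]]]]] | [[?k [?rho [?rho' [?Hk [?E1 ?E2]]]]] | [?k [?j [?Hk [[?E1 ?E2]|[?E1 ?E2]]]]]]]]]).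

Ltac rsolve :=
  first [ left; reflexivity
  | right; left; eexists; split; [| first [left; split; reflexivity | right; split; reflexivity]]; lia
  | right; right; left; (eexists; eexists; split; [|split;[|split; reflexivity]]); lia
  | right; right; right; left; (eexists; eexists; eexists; split; [|split; reflexivity]); lia
  | right; right; right; right; (eexists; eexists; split; [| first [left; split; reflexivity | right; split; reflexivity]]); lia ].

Lemma r_sym i x y : r i x y -> r i y x.
Proof.
  intro H. rinv H; subst; (split; [assumption|split; [assumption|]]); rsolve.
Qed.

Lemma r_refl i x : inG i x -> r i x x.
Proof. intro H. split; [|split]; auto. Qed.

Lemma r_trans_or i x y z : r i x y -> r i y z ->
  r i x z \/ exists k j1 j2, x = D ((i-1)*j1 + k) /\ y = B k /\ z = D ((i-1)*j2+k) /\ 1 <= k < i.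
Proof.
  intros H1 H2. rinv H1; rinv H2; subst; try discriminate;
  repeat match goal with
  | H : B _ = B _ |- _ => injection H as H; subst
  | H : D _ = D _ |- _ => injection H as H
  | H : C _ _ = C _ _ |- _ => injection H as ?H ?H; subst
  | H : A = A |- _ => clear H
  end;
  try (exfalso; lia);
  first [ left; (split; [assumption|split; [assumption|]]); rsolve
        | right; do 3 eexists; split; [reflexivity|split;[reflexivity|split;[reflexivity|lia]]]
        | idtac ].
  left. assert (k = k0).
  { remember (i-1) as m. assert (k <= m /\ k0 <= m) by lia.
    destruct (Nat.lt_total j j0) as [Hl|[->|Hl]].
    - replace j0 with (j + 1 + (j0 - j - 1)) in E0 by lia. nia.
    - lia.
    - replace j with (j0 + 1 + (j - j0 - 1)) in E0 by lia. nia. }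
  subst. apply r_refl; assumption.
Qed.

Lemma gDB i j k : 1 <= i -> 1 <= k < S i -> r i (g i (D (i*j+k))) (B k).
Proof.
  intros Hi Hk. destruct i as [|m]; [lia|].
  destruct (Nat.eq_dec k (S m)) as [->|Hne].
  - unfold g; cbv beta iota.
    replace (S m * j + S m) with (S m * (j+1) + 0) by lia.
    rewrite (proj1 (divmod (S m) (j+1) 0 ltac:(lia))). simpl Nat.eqb. cbv iota.
    split; [split; auto; lia|split; [split; simpl; lia|]]. rsolve.
  - rewrite gD by lia. split; [|split].
    + split; [lia|]. split; [lia|]. lia.
    + split; simpl; lia.
    + right; right; right; right. exists k, (j+1). split; [lia|]. left. split; [|reflexivity].
      f_equal. f_equal. lia.
Qed.

Lemma g_edge i x y : 1 <= i -> r (S i) x y -> r i (g i x) (g i y).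
Proof.
  intros Hi H. pose proof H as H0. rinv H; subst.
  - apply r_refl, g_inG; auto.
  - pose proof (g_inG i _ Hi Hx). pose proof (g_inG i _ Hi Hy). cbn [g] in *.
    split; [assumption|split; [assumption|]]. rsolve.
  - pose proof (g_inG i _ Hi Hx). pose proof (g_inG i _ Hi Hy). cbn [g] in *.
    split; [assumption|split; [assumption|]]. rsolve.
  - pose proof (g_inG i _ Hi Hx). pose proof (g_inG i _ Hi Hy). cbn [g] in *.
    split; [assumption|split; [assumption|]]. rsolve.
  - pose proof (g_inG i _ Hi Hx). pose proof (g_inG i _ Hi Hy). cbn [g] in *.
    split; [assumption|split; [assumption|]].
    assert (i = 1 \/ 2 <= i) as [->|Hi2] by lia.
    + simpl in Hk. destruct (Nat.eqb_spec k 1); [|lia].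
      destruct rho, rho'; rsolve.
    + rewrite L_S in Hk by lia.
      destruct (Nat.eqb_spec k 1).
      * destruct rho, rho'; rsolve.
      * destruct (Nat.leb_spec k (L i + 1)).
        -- rsolve.
        -- destruct rho, rho'; try rsolve;
           right;right;right;right; exists (k - (L i + 1)), 0; (split; [lia| first [left; split; [f_equal; lia|reflexivity] | right; split; [reflexivity|f_equal; lia]]]).
  - replace (S i - 1) with i by lia. apply gDB; auto.
  - replace (S i - 1) with i by lia. apply r_sym, gDB; auto.
Qed.

Lemma coord_g (x : Ginf) n : g (S n) (coord x (S n)) = coord x n.
Proof. exact (proj2 (proj2_sig x n)). Qed.
Lemma coord_inG (x : Ginf) n : inG (S n) (coord x n).
Proof. exact (proj1 (proj2_sig x n)). Qed.

Lemma down (x z : Ginf) m n : n <= m -> coord x m = coord z m -> coord x n = coord z n.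
Proof.
  intros H E. induction m as [|m IH].
  - replace n with 0 by lia. exact E.
  - destruct (Nat.eq_dec n (S m)) as [->|Hne]; [exact E|].
    apply IH; [lia|]. rewrite <- (coord_g x), <- (coord_g z), E. reflexivity.
Qed.

Lemma noDinf (x : Ginf) k m0 : 1 <= k -> k < m0 ->
  ~ (forall t, exists j, coord x (m0 + t) = D ((m0 + t) * j + k)).
Proof.
  intros Hk Hm H. destruct (H 0) as [j0 E0].
  assert (Inv : forall t, exists j, coord x (m0+t) = D ((m0+t)*j+k) /\ j + t = j0).
  { induction t as [|t [j [Ej Hj]]].
    - exists j0. split; [exact E0|lia].
    - destruct (H (S t)) as [j' Ej'].
      pose proof (coord_g x (m0 + t)) as G.
      replace (S (m0 + t)) with (m0 + S t) in G by lia.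
      rewrite Ej', Ej in G. replace (m0 + S t) with (S (m0 + t)) in G by lia.
      rewrite gD in G by lia. injection G as G.
      assert (j = j' + 1).
      { assert (m0 + t <> 0) by lia.
        apply (Nat.mul_cancel_l _ _ (m0 + t)); auto. lia. }
      exists j'. split; [exact Ej'|lia]. }
  destruct (Inv (S j0)) as [j [_ Hj]]. lia.
Qed.

Lemma r_B_right m X k : r (S m) X (B k) -> k <= m -> X = B k \/ exists j, X = D (m*j+k).
Proof.
  intros H Hk. rinv H; subst; try discriminate;
  repeat match goal with
  | H : B _ = B _ |- _ => injection H as H; subst
  end; try (exfalso; lia).
  - left; reflexivity.
  - right. exists j. f_equal. f_equal. lia.
Qed.

Lemma r_C_right i X rho k : r i X (C rho k) -> exists rho', X = C rho' k.
Proof.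
  intros H. rinv H; subst; try discriminate.
  - eauto.
  - injection E2 as <- <-. eauto.
Qed.

Lemma gC_D i r1 r2 idx a b : g i (C r1 idx) = D a -> g i (C r2 idx) = D b -> a = b.
Proof.
  unfold g; cbv beta iota.
  destruct (idx =? 1); [destruct r1; discriminate|].
  destruct (idx <=? L i + 1); [discriminate|].
  destruct r1, r2; try discriminate. congruence.
Qed.

Lemma rinf_sym x y : rinf x y -> rinf y x.
Proof. intros H n. apply r_sym, H. Qed.

Lemma rinf_refl x : rinf x x.
Proof. intros n. apply r_refl, coord_inG. Qed.

Lemma rinf_trans x y z : rinf x y -> rinf y z -> rinf x z.
Proof.
  intros Hxy Hyz n.
  destruct (r_trans_or _ _ _ _ (Hxy n) (Hyz n)) as [H | [k [j1 [j2 [Ex [Ey [Ez Hk]]]]]]]; [exact H|].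
  replace (S n - 1) with n in * by lia.
  destruct (Nat.eq_dec j1 j2) as [<-|Hj].
  { rewrite Ex, <- Ez. apply r_refl. apply coord_inG. }
  exfalso.
  assert (Hne : coord x n <> coord z n).
  { rewrite Ex, Ez. intro E. injection E as E. apply Hj.
    apply (Nat.mul_cancel_l _ _ n); lia. }
  assert (Inv : forall t, coord y (n+t) = B k /\ (exists j, coord x (n+t) = D ((n+t)*j+k))
                 /\ (exists j, coord z (n+t) = D ((n+t)*j+k))).
  { induction t as [|t [IHy [[jx IHx] [jz IHz]]]].
    - rewrite Nat.add_0_r. split; [exact Ey|]. split; eauto.
    - replace (n + S t) with (S (n + t)) by lia. set (m := n + t) in *.
      pose proof (Hxy (S m)) as Rx. pose proof (r_sym _ _ _ (Hyz (S m))) as Rz.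
      pose proof (coord_g y m) as Gy. pose proof (coord_g x m) as Gx. pose proof (coord_g z m) as Gz.
      rewrite IHy in Gy. rewrite IHx in Gx. rewrite IHz in Gz.
      destruct (coord y (S m)) as [|k'|rho idx|p] eqn:Ey'.
      + discriminate.
      + cbn [g] in Gy. injection Gy as ->. split; [reflexivity|].
        destruct (r_B_right _ _ _ Rx ltac:(lia)) as [Bx|[jx' Dx]];
        [rewrite Bx in Gx; discriminate|].
        destruct (r_B_right _ _ _ Rz ltac:(lia)) as [Bz|[jz' Dz]];
        [rewrite Bz in Gz; discriminate|].
        eauto.
      + destruct (r_C_right _ _ _ _ Rx) as [r1 Cx]. destruct (r_C_right _ _ _ _ Rz) as [r2 Cz].
        rewrite Cx in Gx. rewrite Cz in Gz.
        pose proof (gC_D _ _ _ _ _ _ Gx Gz) as Eq.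
        exfalso. apply Hne. apply (down x z m n); [lia|]. rewrite IHx, IHz, Eq. reflexivity.
      + unfold g in Gy. destruct (p mod S m =? 0); discriminate. }
  apply (noDinf x k (S n)); [lia|lia|].
  intro t. destruct (Inv (S t)) as [_ [H _]]. replace (S n + t) with (n + S t) by lia. exact H.
Qed.

Lemma exist_eq (T : Type) (P : T -> Prop) (a b : T) (pa : P a) (pb : P b) :
  a = b -> exist P a pa = exist P b pb.
Proof. intros ->. f_equal. apply proof_irrelevance. Qed.

Lemma pi_eq x y : rinf x y -> pi x = pi y.
Proof.
  intro H. unfold pi. apply exist_eq. extensionality w. apply propositional_extensionality.
  unfold rclass. split; intro H'.
  - exact (rinf_trans _ _ _ (rinf_sym _ _ H) H').
  - exact (rinf_trans _ _ _ H H').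
Qed.

Lemma pi_rinf x y : pi x = pi y -> rinf x y.
Proof.
  intro H. apply (f_equal (@proj1_sig _ _)) in H. simpl in H.
  assert (rclass y y) by apply rinf_refl. rewrite <- H in H0. exact H0.
Qed.

Lemma bclass y k0 : rinf y (bseq k0) -> forall n, coord y n = B (S k0).
Proof.
  intros H.
  assert (Hbig : forall m, S k0 <= m -> coord y m = B (S k0)).
  { intros m Hm. pose proof (H m) as Hr. change (coord (bseq k0) m) with (B (S k0)) in Hr.
    destruct (r_B_right _ _ _ Hr Hm) as [Hb|[j0 Hd]]; [exact Hb|].
    exfalso.
    assert (Inv : forall t, exists j, coord y (m+t) = D ((m+t)*j + S k0)).
    { induction t as [|t [j Ej]].
      - rewrite Nat.add_0_r. eauto.
      - replace (m + S t) with (S (m+t)) by lia.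
        pose proof (H (S (m+t))) as Hr'. change (coord (bseq k0) (S (m+t))) with (B (S k0)) in Hr'.
        destruct (r_B_right _ _ _ Hr' ltac:(lia)) as [Hb|[j' Hd']]; [|eauto].
        pose proof (coord_g y (m+t)) as G. rewrite Hb, Ej in G. discriminate. }
    apply (noDinf y (S k0) (S m)); [lia|lia|].
    intro t. destruct (Inv (S t)) as [j E]. exists j. replace (S m + t) with (m + S t) by lia. exact E. }
  intro n. destruct (le_lt_dec (S k0) n) as [Hn|Hn]; [auto|].
  apply (down y (bseq k0) (S k0) n); [lia|]. apply Hbig. lia.
Qed.

Lemma Bset_char y : Bset (pi y) -> exists k0, forall n, coord y n = B (S k0).
Proof.
  intros [k0 Hk]. exists k0. apply bclass, pi_rinf, Hk.
Qed.

Lemma Bset_intro y k0 : (forall n, coord y n = B (S k0)) -> Bset (pi y).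
Proof.
  intro H. exists k0. f_equal. destruct y as [f Hf]. unfold bseq. apply exist_eq.
  extensionality n. apply H.
Qed.

Lemma closed_Bset : closed_star Bset.
Proof.
  unfold closed_star, open_star, open_inf. intros x Hx.
  pose proof (coord_inG x 0) as H0. unfold inG in H0.
  destruct (coord x 0) as [|k|rho k|k] eqn:E0; try (exfalso; lia).
  - exists 1. intros y Hy HB. destruct (Bset_char y HB) as [k0 Hk0].
    pose proof (Hy 0 ltac:(lia)) as Y0. rewrite E0, Hk0 in Y0. discriminate.
  - destruct k as [|k0]; [lia|].
    assert (exists m, coord x m <> B (S k0)) as [m Hm].
    { apply not_all_ex_not. intro Hall. apply Hx. apply (Bset_intro x k0 Hall). }
    exists (S m). intros y Hy HB. destruct (Bset_char y HB) as [k1 Hk1].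
    pose proof (Hy 0 ltac:(lia)) as Y0. rewrite Hk1, E0 in Y0. injection Y0 as Y0.
    pose proof (Hy m ltac:(lia)) as Ym. rewrite Hk1 in Ym. apply Hm. rewrite <- Ym, Y0. reflexivity.
Qed.

Lemma notB_abar : ~ Bset (pi abar).
Proof.
  intro HB. destruct (Bset_char abar HB) as [k0 Hk0]. specialize (Hk0 0). discriminate.
Qed.

Definition Mf k j := k + 1 + j.
Definition idxf k j c := L (Mf k j) + 1 + k + c - Mf k j.

Definition yf k j c : elt :=
  if c <? k then A else if c <? Mf k j then D (c * (j - (c - k)) + k) else C true (idxf k j c).
Definition zf k j c : elt :=
  if c <? Mf k j then B k else C false (idxf k j c).

Lemma idx_bounds k j c : 1 <= k -> Mf k j <= c -> 2 <= idxf k j c /\ L (Mf k j) + 1 < idxf k j c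
   /\ idxf k j c <= L (S c) /\ (Mf k j < c -> idxf k j c <= L c + 1).
Proof.
  intros Hk Hc. unfold idxf.
  pose proof (L_mono (S (Mf k j)) (S c) ltac:(lia) ltac:(lia)).
  rewrite (L_S (Mf k j)) in H by (unfold Mf; lia).
  split; [lia|]. split; [lia|]. split; [unfold Mf in *; lia|].
  intro Hlt. destruct c as [|c]; [lia|].
  pose proof (L_mono (S (Mf k j)) (S c) ltac:(lia) ltac:(lia)).
  rewrite (L_S (Mf k j)) in H0 by (unfold Mf; lia). unfold Mf in *; lia.
Qed.

Lemma gC_high i rho idx : idx <> 1 -> idx <= L i + 1 -> g i (C rho idx) = C rho (idx - 1).
Proof.
  intros H1 H2. unfold g; cbv beta iota.
  destruct (Nat.eqb_spec idx 1); [lia|]. destruct (Nat.leb_spec idx (L i + 1)); [reflexivity|lia].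
Qed.

Lemma gC_top i rho idx : L i + 1 < idx -> g i (C rho idx) = if rho then D (idx - (L i + 1)) else B (idx - (L i + 1)).
Proof.
  intros H2. unfold g; cbv beta iota.
  destruct (Nat.eqb_spec idx 1); [pose proof (L_mono 1 1); lia|]. destruct (Nat.leb_spec idx (L i + 1)); [lia|reflexivity].
Qed.

Lemma yf_thread k j : 1 <= k -> is_thread (yf k j).
Proof.
  intros Hk c. unfold yf.
  destruct (Nat.ltb_spec c k); destruct (Nat.ltb_spec (S c) k).
  - split; [split; [lia|exact I]|reflexivity].
  - assert (S c = k) by lia. subst k.
    destruct (Nat.ltb_spec (S c) (Mf (S c) j)); [|unfold Mf in *; lia].
    split; [split; [lia|exact I]|].
    unfold g; cbv beta iota. replace (S c * (j - (S c - S c)) + S c) with (S c * (j+1) + 0) by lia.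
    rewrite (proj1 (divmod (S c) (j+1) 0 ltac:(lia))). reflexivity.
  - lia.
  - destruct (Nat.ltb_spec c (Mf k j)); destruct (Nat.ltb_spec (S c) (Mf k j)).
    + split; [split; [lia|split; nia]|].
      rewrite gD by lia. f_equal. f_equal. unfold Mf in *. f_equal. lia.
    + assert (S c = Mf k j) by lia.
      split; [split; [lia|split; nia]|].
      rewrite gC_top.
      * f_equal. unfold idxf. rewrite <- H3. unfold Mf in *.
        replace (j - (c - k)) with 0 by lia. lia.
      * unfold idxf. rewrite <- H3. unfold Mf in *. lia.
    + lia.
    + destruct (idx_bounds k j c Hk ltac:(lia)) as (B1 & B2 & B3 & _).
      destruct (idx_bounds k j (S c) Hk ltac:(lia)) as (C1 & C2 & C3 & C4).
      split; [split; [lia|split; nia]|].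
      rewrite gC_high by (try apply C4; lia). f_equal. unfold idxf. unfold idxf in C2. lia.
Qed.

Lemma zf_thread k j : 1 <= k -> is_thread (zf k j).
Proof.
  intros Hk c. unfold zf.
  destruct (Nat.ltb_spec c (Mf k j)); destruct (Nat.ltb_spec (S c) (Mf k j)).
  - split; [split; [lia|simpl; lia]|reflexivity].
  - assert (S c = Mf k j) by lia.
    split; [split; [lia|simpl; lia]|].
    rewrite gC_top.
    + f_equal. unfold idxf. rewrite <- H1. unfold Mf in *. lia.
    + unfold idxf. rewrite <- H1. unfold Mf in *. lia.
  - lia.
  - destruct (idx_bounds k j c Hk ltac:(lia)) as (B1 & B2 & B3 & _).
    destruct (idx_bounds k j (S c) Hk ltac:(lia)) as (C1 & C2 & C3 & C4).
    split; [split; [lia|split; unfold Mf in *; lia]|].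
    rewrite gC_high by (try apply C4; lia). f_equal. unfold idxf. unfold idxf in C2. lia.
Qed.

Definition yt k j (Hk : 1 <= k) : Ginf := exist _ (yf k j) (yf_thread k j Hk).
Definition zt k j (Hk : 1 <= k) : Ginf := exist _ (zf k j) (zf_thread k j Hk).

Lemma yz_rel k j (Hk : 1 <= k) : rinf (yt k j Hk) (zt k j Hk).
Proof.
  intro c. unfold coord; simpl.
  pose proof (coord_inG (yt k j Hk) c) as Iy. pose proof (coord_inG (zt k j Hk) c) as Iz.
  unfold coord in Iy, Iz; simpl in Iy, Iz.
  split; [exact Iy|split; [exact Iz|]].
  unfold yf, zf in *.
  destruct (Nat.ltb_spec c k); destruct (Nat.ltb_spec c (Mf k j)); try (unfold Mf in *; lia).
  - right; left. exists k. split; [lia|left; split; reflexivity].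
  - right; right; right; right. exists k, (j - (c - k)). split; [lia|]. left.
    split; [f_equal; f_equal; f_equal; lia|reflexivity].
  - right; right; right; left. exists (idxf k j c), true, false. split; [|split; reflexivity].
    destruct Iy as [_ [_ I]]. exact I.
Qed.

Lemma nosep : ~ (exists U V : Gstar -> Prop, open_star U /\ open_star V /\ U (pi abar) /\
       (forall q, Bset q -> V q) /\ (forall q, U q -> V q -> False)).
Proof.
  intros [U [V [HU [HV [HUa [HBV Hdis]]]]]].
  destruct (HU abar HUa) as [n Hn].
  assert (HVb : V (pi (bseq n))) by (apply HBV; exists n; reflexivity).
  destruct (HV (bseq n) HVb) as [N HN].
  assert (Hk : 1 <= S n) by lia.
  assert (HUy : U (pi (yt (S n) N Hk))).
  { apply Hn. intros m Hm. unfold coord; simpl. unfold yf.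
    destruct (Nat.ltb_spec m (S n)); [reflexivity|lia]. }
  assert (HVz : V (pi (zt (S n) N Hk))).
  { apply HN. intros m Hm. unfold coord; simpl. unfold zf.
    destruct (Nat.ltb_spec m (Mf (S n) N)); [reflexivity|unfold Mf in *; lia]. }
  rewrite <- (pi_eq _ _ (yz_rel (S n) N Hk)) in HVz.
  exact (Hdis _ HUy HVz).
Qed.

Theorem mainTheorem10 :
  (forall i e, 1 <= i -> inG (S i) e -> inG i (g i e)) /\
  (forall i x y, 1 <= i -> r (S i) x y -> r i (g i x) (g i y)) /\
  (forall x : Ginf, rinf x x) /\
  (forall x y : Ginf, rinf x y -> rinf y x) /\
  (forall x y z : Ginf, rinf x y -> rinf y z -> rinf x z) /\
  closed_star Bset /\
  ~ Bset (pi abar) /\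
  ~ (exists U V : Gstar -> Prop, open_star U /\ open_star V /\ U (pi abar) /\
       (forall q, Bset q -> V q) /\ (forall q, U q -> V q -> False)) /\
  ~ regular_star.
Proof.
  split; [exact g_inG|]. split; [exact g_edge|]. split; [exact rinf_refl|].
  split; [exact rinf_sym|]. split; [exact rinf_trans|]. split; [exact closed_Bset|].
  split; [exact notB_abar|]. split; [exact nosep|].
  intro Hreg. apply nosep. exact (Hreg (pi abar) Bset closed_Bset notB_abar).
Qed.
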